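(* Let $\sigma^2>0$, $0<\dot R<\frac{1}{2\sigma^2}$ and $0<\epsilon<1$. For each integer $\mathsf{M}\ge 2$, set $\xi=\sqrt{\log\mathsf{M}/\dot R}$ and $\Upsilon=\xi-\sigma Q^{-1}(\epsilon)$. Consider the pulse-position modulation scheme of block length $n=\mathsf{M}$ in which message $m\in\{1,\dots,\mathsf{M}\}$ is mapped to $x_k(m)=\xi$ if $k=m$ and $x_k(m)=0$ otherwise (so the energy is $\mathsf{E}=\xi^2=\log\mathsf{M}/\dot R$); the one-bit quantizer with region $\{\tilde y\ge\Upsilon\}$ is used, i.e. $Y_k=1$ if $x_k+Z_k\ge\Upsilon$ and $Y_k=-1$ otherwise, with $Z_k$ i.i.d. $\mathcal{N}(0,\sigma^2)$; and the decoder outputs $\hat M=m$ if $Y_m=1$ and $Y_k=-1$ for all $k\neq m$, and declares an error otherwise. Then the error probability satisfies $$\Pr(\hat M\neq M)\le (\mathsf{M}-1)\,Q\!\left(\frac{\xi-\sigma Q^{-1}(\epsilon)}{\sigma}\right)+\epsilon,$$ and $\limsup_{\mathsf{M}\to\infty}\Pr(\hat M\neq M)\le\epsilon$. Consequently every rate per unit-energy $\dot R<\frac{1}{2\sigma^2}$ is achievable by such PPM schemes with threshold quantizers.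
   Context: $Q(x)=\frac{1}{\sqrt{2\pi}}\int_x^\infty e^{-t^2/2}\,dt$ and $Q^{-1}$ is its inverse; $\log$ is natural. The message $M$ is uniform on $\{1,\dots,\mathsf{M}\}$. A rate per unit-energy $\dot R$ is achievable if for every $\epsilon'>0$ there exist an encoder with $\sum_k x_k^2\le\mathsf{E}$ for every message, a quantization region and a decoder with $\log\mathsf{M}/\mathsf{E}>\dot R-\epsilon'$ and $\Pr(\hat M\neq M)\to0$ as $\mathsf{E}\to\infty$. *)

(* Defs.v *)
From Stdlib Require Import Reals Lra Lia List Arith.
Import ListNotations.
Open Scope R_scope.

Definition gauss_pdf (t : R) : R := / sqrt (2 * PI) * exp (- (t ^ 2) / 2).

(** [gauss_tail x l] : the improper Riemann integral
    int_x^infty gauss_pdf(t) dt converges to l, i.e. l = Q(x). *)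
Definition gauss_tail (x l : R) : Prop :=
  forall eps : R, 0 < eps ->
    exists B : R, forall b : R, B <= b ->
      forall pr : Riemann_integrable gauss_pdf x b,
        Rabs (RiemannInt pr - l) < eps.

Definition lsum {A : Type} (f : A -> R) (l : list A) : R :=
  fold_right Rplus 0 (map f l).

(** All output sign vectors of length n (true = +1, false = -1). *)
Fixpoint bools (n : nat) : list (list bool) :=
  match n with
  | O => [[]]
  | S n' => map (cons true) (bools n') ++ map (cons false) (bools n')
  end.

(** A coding scheme with a one-bit threshold quantizer.
    Messages are indexed 0..Msz-1 (the paper's 1..M shifted by one),
    coordinates 0..blen-1. Y_k = +1 (true) iff x_k + Z_k >= thr. *)
Record scheme := mkScheme {
  blen : nat;
  Msz : nat;
  cw : nat -> nat -> R;            (* cw m k = x_k(m) *)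
  thr : R;
  dec : list bool -> option nat    (* None = declared error *)
}.

(** Probability of the output vector y given input xs, with Z_k iid N(0,sigma^2):
    Pr(x + Z >= thr) = Pr(Z/sigma >= (thr - x)/sigma) = Q((thr - x)/sigma). *)
Fixpoint prob_out (Q : R -> R) (sigma th : R) (xs : list R) (y : list bool) : R :=
  match xs, y with
  | x :: xs', b :: y' =>
      (if b then Q ((th - x) / sigma) else 1 - Q ((th - x) / sigma))
        * prob_out Q sigma th xs' y'
  | [], [] => 1
  | _, _ => 0
  end.

Definition codeword (s : scheme) (m : nat) : list R :=
  map (cw s m) (seq 0 (blen s)).

Definition perr_m (Q : R -> R) (sigma : R) (s : scheme) (m : nat) : R :=
  1 - lsum (fun y => match dec s y with
                     | Some m' => if Nat.eqb m' m
                                  then prob_out Q sigma (thr s) (codeword s m) y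
                                  else 0
                     | None => 0 end)
           (bools (blen s)).

Definition perr (Q : R -> R) (sigma : R) (s : scheme) : R :=
  / INR (Msz s) * lsum (perr_m Q sigma s) (seq 0 (Msz s)).

Definition energy_ok (s : scheme) (E : R) : Prop :=
  forall m, (m < Msz s)%nat -> lsum (fun k => cw s m k ^ 2) (seq 0 (blen s)) <= E.

Definition ppm_dec (y : list bool) : option nat :=
  match filter (fun k => nth k y false) (seq 0 (length y)) with
  | [m] => Some m
  | _ => None
  end.

Definition ppm (M : nat) (xi ups : R) : scheme :=
  mkScheme M M (fun m k => if Nat.eqb k m then xi else 0) ups ppm_dec.

Definition is_ppm (s : scheme) : Prop :=
  exists xi ups : R, s = ppm (Msz s) xi ups.

Definition xi_of (Rdot : R) (M : nat) : R := sqrt (ln (INR M) / Rdot).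

Definition ppm_thm (sigma Rdot qinv : R) (M : nat) : scheme :=
  ppm M (xi_of Rdot M) (xi_of Rdot M - sigma * qinv).

(** Achievability of rate per unit-energy Rdot using schemes satisfying P
    (codes indexed by the energy E > 0, error probability -> 0 as E -> oo). *)
Definition achievable_by (P : scheme -> Prop) (Q : R -> R) (sigma Rdot : R) : Prop :=
  forall eps' : R, 0 < eps' ->
    exists code : R -> scheme,
      (forall E : R, 0 < E ->
         P (code E) /\ (1 <= Msz (code E))%nat /\ energy_ok (code E) E /\
         ln (INR (Msz (code E))) / E > Rdot - eps') /\
      (forall d : R, 0 < d -> exists E0 : R, forall E : R, E0 <= E ->
         Rabs (perr Q sigma (code E)) < d).

(* Main.v *)
Require Import Defs.
From Stdlib Require Import Reals Lra Psatz Lia List Arith ZArith.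
From Coquelicot Require Import Coquelicot.
Import ListNotations.
Open Scope R_scope.


Definition gf (t : R) : R := exp (- (t ^ 2)).
Definition GI (x : R) : R := RInt gf 0 x.
Definition fp (x t : R) : R := exp (- (x ^ 2) * (1 + t ^ 2)) / (1 + t ^ 2).
Definition dfp (x t : R) : R := -2 * x * exp (- (x ^ 2) * (1 + t ^ 2)).

Lemma gf_cont : forall x, continuous gf x.
Proof. intros x. apply (@ex_derive_continuous R_AbsRing R_NormedModule). unfold gf. auto_derive. easy. Qed.

Lemma gf_exRInt : forall a b, ex_RInt gf a b.
Proof. intros. apply (@ex_RInt_continuous R_CompleteNormedModule). intros; apply gf_cont. Qed.

Lemma GI_derive : forall x, is_derive GI x (gf x).
Proof.
  intros x. apply is_derive_RInt with 0.
  - apply filter_forall. intros b. apply (@RInt_correct R_CompleteNormedModule). apply gf_exRInt.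
  - apply gf_cont.
Qed.

Lemma opp1 : forall t, 0 < 1 + t^2.
Proof. intros. nra. Qed.

Lemma Derive_fp : forall u v, Derive (fun z => fp z v) u = dfp u v.
Proof.
  intros u v. apply is_derive_unique. unfold fp, dfp.
  auto_derive. - pose proof (opp1 v); lra.
  - pose proof (opp1 v). replace (v*(v*1)) with (v^2) by ring. replace (u*(u*1)) with (u^2) by ring. field. lra.
Qed.


Lemma dfp_cont : forall x t, continuity_2d_pt dfp x t.
Proof.
  intros x t.
  apply continuity_2d_pt_ext with (fun u v => ((-2) * u) * exp ((- (u * u)) * (1 + v * v))).
  { intros u v; unfold dfp. replace (u*u) with (u^2) by ring. replace (v*v) with (v^2) by ring. ring. }
  apply continuity_2d_pt_mult.
  - apply continuity_2d_pt_mult. apply continuity_2d_pt_const. apply continuity_2d_pt_id1.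
  - apply continuity_1d_2d_pt_comp.
    + apply derivable_continuous_pt, derivable_pt_exp.
    + apply continuity_2d_pt_mult.
      * apply continuity_2d_pt_opp, continuity_2d_pt_mult; apply continuity_2d_pt_id1.
      * apply continuity_2d_pt_plus. apply continuity_2d_pt_const.
        apply continuity_2d_pt_mult; apply continuity_2d_pt_id2.
Qed.

Lemma fp_cont : forall x t, continuous (fp x) t.
Proof.
  intros x t. apply (@ex_derive_continuous R_AbsRing R_NormedModule). unfold fp. auto_derive.
  pose proof (opp1 t); lra.
Qed.

Lemma param_derive : forall x,
  is_derive (fun x => RInt (fun t => fp x t) 0 1) x (RInt (fun t => dfp x t) 0 1).
Proof.
  intros x.
  replace (RInt (fun t => dfp x t) 0 1) with (RInt (fun t => Derive (fun u => fp u t) x) 0 1).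
  2:{ apply RInt_ext. intros; apply Derive_fp. }
  apply (is_derive_RInt_param fp 0 1 x).
  - apply filter_forall. intros y t _. unfold fp. auto_derive. pose proof (opp1 t); lra.
  - intros t _. apply continuity_2d_pt_ext with dfp.
    + intros; symmetry; apply Derive_fp.
    + apply dfp_cont.
  - apply filter_forall. intros y. apply (@ex_RInt_continuous R_CompleteNormedModule).
    intros; apply fp_cont.
Qed.


Lemma RInt_scalR : forall (f : R -> R) a b l, ex_RInt f a b ->
  RInt (fun x => l * f x) a b = l * RInt f a b.
Proof. intros. exact (@RInt_scal R_CompleteNormedModule f a b l H). Qed.

Lemma RInt_comp_linR : forall (f : R -> R) u v a b, ex_RInt f (u*a+v) (u*b+v) ->
  RInt (fun y => u * f (u*y+v)) a b = RInt f (u*a+v) (u*b+v).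
Proof. intros. exact (@RInt_comp_lin R_CompleteNormedModule f u v a b H). Qed.

Lemma RInt_extR : forall (f g : R -> R) a b, (forall x, f x = g x) -> RInt f a b = RInt g a b.
Proof. intros. apply RInt_ext. intros; apply H. Qed.

Lemma RInt_dfp : forall x, RInt (fun t => dfp x t) 0 1 = -2 * gf x * GI x.
Proof.
  intros x.
  transitivity (RInt (fun t => (-2 * gf x) * (x * gf (x * t + 0))) 0 1).
  { apply RInt_extR. intros t. unfold dfp, gf.
    replace (x * t + 0) with (x*t) by ring.
    replace (- x ^ 2 * (1 + t ^ 2)) with (- x^2 + - (x*t)^2) by ring.
    rewrite exp_plus. ring. }
  rewrite RInt_scalR.
  2:{ apply (@ex_RInt_continuous R_CompleteNormedModule). intros z _.
      apply (@ex_derive_continuous R_AbsRing R_NormedModule). unfold gf. auto_derive. easy. }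
  rewrite RInt_comp_linR. 2: apply gf_exRInt.
  unfold GI.
  replace (x*0+0) with 0 by ring. replace (x*1+0) with x by ring. reflexivity.
Qed.

Definition hh (x : R) : R := GI x ^ 2 + RInt (fun t => fp x t) 0 1.

Lemma hh_derive : forall x, is_derive hh x 0.
Proof.
  intros x.
  assert (H : is_derive hh x (INR 2 * gf x * GI x ^ (2 - 1) + RInt (fun t => dfp x t) 0 1)).
  { unfold hh. apply (@is_derive_plus R_AbsRing R_NormedModule).
    - apply is_derive_pow. apply GI_derive.
    - apply param_derive. }
  replace (INR 2 * gf x * GI x ^ (2 - 1) + RInt (fun t => dfp x t) 0 1) with 0 in H.
  exact H. rewrite RInt_dfp. simpl. ring.
Qed.

Lemma hh_const : forall x, hh x = hh 0.
Proof.
  intros x.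
  assert (H := @is_RInt_derive R_CompleteNormedModule hh (fun _ => 0) 0 x
     (fun y _ => hh_derive y) (fun y _ => continuous_const 0 y)).
  apply is_RInt_unique in H. rewrite RInt_const in H.
  unfold scal, minus, plus, opp in H; simpl in H. unfold mult in H; simpl in H.
  unfold plus, opp in H; simpl in H. lra.
Qed.

Lemma RInt_pointR : forall (f : R -> R) a, RInt f a a = 0.
Proof. intros. exact (@RInt_point R_CompleteNormedModule a f). Qed.

Lemma hh0 : hh 0 = PI / 4.
Proof.
  unfold hh. 
  assert (E1 : GI 0 = 0) by (unfold GI; apply RInt_pointR).
  assert (E2 : RInt (fun t => fp 0 t) 0 1 = RInt (fun t => / (1 + t^2)) 0 1).
  { apply RInt_extR. intros t. unfold fp. replace (- 0^2 * (1 + t^2)) with 0 by ring.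
    rewrite exp_0. unfold Rdiv. ring. }
  rewrite E1, E2.
  assert (H := @is_RInt_derive R_CompleteNormedModule atan (fun t => / (1 + t^2)) 0 1).
  assert (D1 : forall x : R, Rmin 0 1 <= x <= Rmax 0 1 -> is_derive atan x ((fun t : R => / (1 + t ^ 2)) x)).
  { intros y _. apply is_derive_Reals. 
    apply derivable_pt_lim_atan. }
  assert (D2 : forall x : R, Rmin 0 1 <= x <= Rmax 0 1 -> continuous (fun t : R => / (1 + t ^ 2)) x).
  { intros y _. apply (@ex_derive_continuous R_AbsRing R_NormedModule). auto_derive.
    pose proof (opp1 y); lra. }
  rewrite (is_RInt_unique _ _ _ _ (H D1 D2)).
  unfold minus, plus, opp; simpl. rewrite atan_1, atan_0. lra.
Qed.


Lemma exp_le_mono : forall x y, x <= y -> exp x <= exp y.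
Proof. intros x y H. destruct (Rle_lt_or_eq_dec _ _ H). left; apply exp_increasing; auto. subst; lra. Qed.

Lemma RInt_constR : forall a b c, RInt (fun _ => c) a b = (b - a) * c.
Proof. intros. exact (@RInt_const R_CompleteNormedModule a b c). Qed.

Lemma fp_exRInt : forall c a b, ex_RInt (fun t => fp c t) a b.
Proof. intros. apply (@ex_RInt_continuous R_CompleteNormedModule). intros; apply fp_cont. Qed.

Lemma J_bounds : forall c, 0 <= RInt (fun t => fp c t) 0 1 <= exp (- c^2).
Proof.
  intros c. split.
  - apply RInt_ge_0. lra. apply fp_exRInt. intros t _. unfold fp.
    apply Rle_mult_inv_pos. left; apply exp_pos. apply opp1.
  - replace (exp (- c^2)) with (RInt (fun _ => exp (- c^2)) 0 1).
    2:{ rewrite RInt_constR. change ((1-0) * exp (- c^2) = exp (- c^2)). ring. }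
    apply RInt_le. lra. apply fp_exRInt.
    apply (@ex_RInt_continuous R_CompleteNormedModule). intros; apply continuous_const.
    intros t Ht. unfold fp.
    assert (H1 : exp (- c ^ 2 * (1 + t ^ 2)) <= exp (- c^2)).
    { apply exp_le_mono. assert (0 <= c^2 * t^2) by (apply Rmult_le_pos; apply pow2_ge_0). nra. }
    assert (H2 : 1 <= 1 + t^2) by (pose proof (pow2_ge_0 t); lra).
    pose proof (exp_pos (- c ^ 2 * (1 + t ^ 2))).
    apply Rle_trans with (exp (- c ^ 2 * (1 + t ^ 2))); auto.
    unfold Rdiv. rewrite <- (Rmult_1_r (exp _)) at 2. apply Rmult_le_compat_l. lra.
    rewrite <- Rinv_1. apply Rinv_le_contravar; lra.
Qed.

Lemma GI_ge0 : forall c, 0 <= c -> 0 <= GI c.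
Proof.
  intros c Hc. apply RInt_ge_0; auto. apply gf_exRInt. intros; left; apply exp_pos.
Qed.

Lemma GI_bound : forall c, 0 <= c -> Rabs (GI c - sqrt PI / 2) <= 2 * exp (- c^2) / sqrt PI.
Proof.
  intros c Hc.
  pose proof (hh_const c) as H. rewrite hh0 in H. unfold hh in H.
  pose proof (J_bounds c) as [J1 J2].
  pose proof (GI_ge0 c Hc) as G0.
  assert (Hs : 0 < sqrt PI) by (apply sqrt_lt_R0; apply PI_RGT_0).
  assert (Hs2 : sqrt PI * sqrt PI = PI) by (apply sqrt_sqrt; left; apply PI_RGT_0).
  set (s := sqrt PI) in *. set (g := GI c) in *.
  set (J := RInt (fun t => fp c t) 0 1) in *. set (e := exp (- c^2)) in *.
  assert (Hd : (g - s/2) * (g + s/2) = - J) by nra.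
  assert (0 < g + s/2) by lra.
  apply Rabs_le. split.
  - apply Rle_trans with (- J / (s/2)).
    + apply Rle_trans with (- e / (s/2)). unfold Rdiv. right; field. lra.
      unfold Rdiv. apply Rmult_le_compat_r. left; apply Rinv_0_lt_compat; lra. lra.
    + assert (g - s/2 = - J / (g + s/2)) by (apply (Rmult_eq_reg_r (g + s/2)); [rewrite Hd; field; lra | lra]).
      rewrite H1. unfold Rdiv. rewrite !Ropp_mult_distr_l_reverse. apply Ropp_le_contravar.
      apply Rmult_le_compat_l. lra. apply Rinv_le_contravar; lra.
  - assert (g - s/2 <= 0) by nra.
    apply Rle_trans with 0; auto. apply Rmult_le_pos. pose proof (exp_pos (-c^2)); unfold e; lra.
    left; apply Rinv_0_lt_compat; auto.
Qed.


Lemma phi_cont : forall x, continuous gauss_pdf x.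
Proof. intros x. apply (@ex_derive_continuous R_AbsRing R_NormedModule). unfold gauss_pdf. auto_derive. easy. Qed.

Lemma phi_ex : forall a b, ex_RInt gauss_pdf a b.
Proof. intros. apply (@ex_RInt_continuous R_CompleteNormedModule). intros; apply phi_cont. Qed.

Lemma phi_pos : forall t, 0 < gauss_pdf t.
Proof.
  intros t. unfold gauss_pdf. apply Rmult_lt_0_compat. apply Rinv_0_lt_compat.
  apply sqrt_lt_R0. pose proof PI_RGT_0; lra. apply exp_pos.
Qed.

Lemma zero_small : forall a, (forall eps, 0 < eps -> Rabs a < eps) -> a = 0.
Proof.
  intros a H. destruct (Req_dec a 0); auto.
  specialize (H (Rabs a) (Rabs_pos_lt _ H0)). lra.
Qed.

Lemma HQ' : forall Q : R -> R, (forall x, gauss_tail x (Q x)) ->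
  forall x eps, 0 < eps -> exists B, forall b, B <= b -> Rabs (RInt gauss_pdf x b - Q x) < eps.
Proof.
  intros Q HQ x eps He. destruct (HQ x eps He) as [B HB].
  exists (Rmax B x). intros b Hb.
  assert (pr : Riemann_integrable gauss_pdf x b) by (apply ex_RInt_Reals_0, phi_ex).
  rewrite (RInt_Reals _ _ _ pr). apply HB.
  apply Rle_trans with (Rmax B x); auto. apply Rmax_l.
Qed.

Lemma RInt_ChaslesR : forall (f : R -> R) a b c, ex_RInt f a b -> ex_RInt f b c ->
  RInt f a b + RInt f b c = RInt f a c.
Proof. intros. exact (@RInt_Chasles R_CompleteNormedModule f a b c H H0). Qed.

Lemma Q_diff : forall Q : R -> R, (forall x, gauss_tail x (Q x)) ->
  forall x y, Q x - Q y = RInt gauss_pdf x y.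
Proof.
  intros Q HQ x y.
  apply Rminus_diag_uniq. apply zero_small. intros eps He.
  destruct (HQ' Q HQ x (eps/2)) as [B1 H1]. lra.
  destruct (HQ' Q HQ y (eps/2)) as [B2 H2]. lra.
  set (b := Rmax B1 B2).
  specialize (H1 b (Rmax_l _ _)). specialize (H2 b (Rmax_r _ _)).
  rewrite <- (RInt_ChaslesR gauss_pdf x y b) in H1 by apply phi_ex.
  apply Rabs_def2 in H1. apply Rabs_def2 in H2. apply Rabs_def1; lra.
Qed.

Lemma Q_ge0 : forall Q : R -> R, (forall x, gauss_tail x (Q x)) -> forall x, 0 <= Q x.
Proof.
  intros Q HQ x. apply Rnot_lt_le. intros Hn.
  destruct (HQ' Q HQ x (- Q x)) as [B HB]. lra.
  specialize (HB (Rmax B x) (Rmax_l _ _)).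
  assert (0 <= RInt gauss_pdf x (Rmax B x)).
  { apply RInt_ge_0. apply Rmax_r. apply phi_ex. intros; left; apply phi_pos. }
  apply Rabs_def2 in HB. lra.
Qed.

Lemma sqrt2_pos : 0 < sqrt 2.
Proof. apply sqrt_lt_R0; lra. Qed.

Lemma RInt_phi_GI : forall c, RInt gauss_pdf 0 (sqrt 2 * c) = / sqrt PI * GI c.
Proof.
  intros c.
  assert (Hs : 0 < sqrt PI) by (apply sqrt_lt_R0; apply PI_RGT_0).
  pose proof sqrt2_pos.
  replace (sqrt 2 * c) with (sqrt 2 * c + 0) by ring.
  replace 0 with (sqrt 2 * 0 + 0) at 1 by ring.
  rewrite <- RInt_comp_linR by apply phi_ex.
  unfold GI. rewrite <- RInt_scalR by apply gf_exRInt.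
  apply RInt_extR. intros t. unfold gauss_pdf, gf.
  replace (- (sqrt 2 * t + 0) ^ 2 / 2) with (- t^2).
  2:{ replace ((sqrt 2 * t + 0) ^ 2) with ((sqrt 2 * sqrt 2) * t^2) by ring.
      rewrite sqrt_sqrt by lra. field. }
  rewrite sqrt_mult by (try lra; left; apply PI_RGT_0).
  field. split; lra.
Qed.

Lemma Q_half : forall Q : R -> R, (forall x, gauss_tail x (Q x)) -> Q 0 = 1/2.
Proof.
  intros Q HQ. apply Rminus_diag_uniq. apply zero_small. intros eps He.
  destruct (HQ' Q HQ 0 (eps/2)) as [B HB]. lra.
  set (c := Rmax (Rabs B) (2/eps + 1)).
  assert (Hc1 : 1 <= c). { unfold c. apply Rle_trans with (2/eps+1). 
    assert (0 < 2/eps) by (apply Rdiv_lt_0_compat; lra). lra. apply Rmax_r. }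
  assert (HcB : B <= sqrt 2 * c).
  { apply Rle_trans with c. apply Rle_trans with (Rabs B). apply Rle_abs. apply Rmax_l.
    assert (1 <= sqrt 2). { rewrite <- sqrt_1. apply sqrt_le_1_alt. lra. } nra. }
  specialize (HB _ HcB). rewrite RInt_phi_GI in HB.
  assert (Hs : 0 < sqrt PI) by (apply sqrt_lt_R0; apply PI_RGT_0).
  assert (Hs2 : sqrt PI * sqrt PI = PI) by (apply sqrt_sqrt; left; apply PI_RGT_0).
  pose proof (GI_bound c ltac:(lra)) as Hg.
  assert (Hexp : exp (- c^2) <= / (1 + c^2)).
  { pose proof (exp_ineq1_le (c^2)). pose proof (exp_pos (c^2)).
    rewrite exp_Ropp. apply Rinv_le_contravar; nra. }
  assert (Hc2 : 2/eps + 1 <= c) by apply Rmax_r.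
  assert (Hinv : / (1 + c^2) <= eps / 2).
  { assert (c <= c^2) by nra.
    assert (2/eps * eps = 2) by (field; lra).
    assert (2 / eps < 1 + c^2) by lra.
    apply Rle_trans with (/ (2/eps)). apply Rinv_le_contravar. apply Rdiv_lt_0_compat; lra. lra.
    right. field. lra. }
  assert (HPI : 2 < PI) by (pose proof PI2_1; lra).
  set (g := GI c) in *. set (e := exp (- c^2)) in *. set (s := sqrt PI) in *.
  assert (Hk : Rabs (/ s * g - 1/2) <= eps/2).
  { replace (/ s * g - 1/2) with (/ s * (g - s/2)) by (field; lra).
    rewrite Rabs_mult, Rabs_inv, (Rabs_pos_eq s) by lra.
    apply Rle_trans with (/ s * (2 * e / s)).
    apply Rmult_le_compat_l. left; apply Rinv_0_lt_compat; lra. auto.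
    replace (/ s * (2 * e / s)) with (2 * e / PI) by (rewrite <- Hs2; field; lra).
    assert (0 < e) by apply exp_pos.
    apply Rle_trans with e. apply Rmult_le_reg_r with PI. lra. unfold Rdiv.
    rewrite Rmult_assoc, Rinv_l by lra. nra. lra. }
  apply Rabs_def2 in HB. apply Rabs_le_between in Hk. 
  apply Rabs_def1; lra.
Qed.


Lemma RInt_swapR : forall (f : R -> R) a b, ex_RInt f a b -> RInt f b a = - RInt f a b.
Proof. intros. rewrite <- (@opp_RInt_swap R_CompleteNormedModule f a b H). reflexivity. Qed.

Lemma phi_even : forall t, gauss_pdf (- t) = gauss_pdf t.
Proof. intros; unfold gauss_pdf. replace ((-t)^2) with (t^2) by ring. reflexivity. Qed.

Lemma RInt_phi_sym : forall x, RInt gauss_pdf (- x) 0 = RInt gauss_pdf 0 x.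
Proof.
  intros x.
  assert (H := RInt_comp_linR gauss_pdf (-1) 0 0 x (phi_ex _ _)).
  replace (-1 * 0 + 0) with 0 in H by ring. replace (-1 * x + 0) with (- x) in H by ring.
  rewrite RInt_scalR in H.
  2:{ apply (@ex_RInt_continuous R_CompleteNormedModule). intros.
      apply (@ex_derive_continuous R_AbsRing R_NormedModule). unfold gauss_pdf. auto_derive. easy. }
  assert (H' : RInt (fun y => gauss_pdf (-1 * y + 0)) 0 x = RInt gauss_pdf 0 x).
  { apply RInt_extR. intros t. replace (-1 * t + 0) with (- t) by ring. rewrite phi_even. auto. }
  rewrite H' in H. rewrite RInt_swapR by apply phi_ex. rewrite <- H. lra.
Qed.

Lemma Q_sym : forall Q : R -> R, (forall x, gauss_tail x (Q x)) ->
  forall x, Q (- x) = 1 - Q x.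
Proof.
  intros Q HQ x.
  pose proof (Q_diff Q HQ (- x) 0). pose proof (Q_diff Q HQ 0 x).
  rewrite RInt_phi_sym in H. pose proof (Q_half Q HQ). lra.
Qed.

Lemma Q_le1 : forall Q : R -> R, (forall x, gauss_tail x (Q x)) -> forall x, Q x <= 1.
Proof.
  intros Q HQ x. pose proof (Q_sym Q HQ x). pose proof (Q_ge0 Q HQ (- x)). lra.
Qed.

Lemma Q_tail : forall Q : R -> R, (forall x, gauss_tail x (Q x)) ->
  forall x, 1 <= x -> Q x <= exp (- x^2 / 2).
Proof.
  intros Q HQ x Hx.
  apply Rnot_lt_le. intros Hn.
  set (d := Q x - exp (- x ^ 2 / 2)).
  destruct (HQ' Q HQ x d) as [B HB]. unfold d; lra.
  set (b := Rmax B x). specialize (HB b (Rmax_l _ _)).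
  assert (Hxb : x <= b) by apply Rmax_r.
  assert (Hsq : 1 <= sqrt (2 * PI)).
  { rewrite <- sqrt_1. apply sqrt_le_1_alt. pose proof PI2_1; lra. }
  assert (H1 : RInt gauss_pdf x b <= RInt (fun t => t * gauss_pdf t) x b).
  { apply RInt_le; auto. apply phi_ex.
    apply (@ex_RInt_continuous R_CompleteNormedModule). intros.
    apply (@ex_derive_continuous R_AbsRing R_NormedModule). unfold gauss_pdf. auto_derive. easy.
    intros t Ht. pose proof (phi_pos t). nra. }
  assert (H2 : RInt (fun t => t * gauss_pdf t) x b = gauss_pdf x - gauss_pdf b).
  { assert (H := @is_RInt_derive R_CompleteNormedModule (fun t => - gauss_pdf t)
        (fun t => t * gauss_pdf t) x b).
    assert (D1 : forall x0 : R, Rmin x b <= x0 <= Rmax x b ->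
       is_derive (fun t : R => - gauss_pdf t) x0 ((fun t : R => t * gauss_pdf t) x0)).
    { intros t _. unfold gauss_pdf. auto_derive. easy.
      replace (- (t * (t * 1)) * / 2) with (- t ^ 2 / 2) by (unfold Rdiv; ring).
      match goal with |- ?a = ?b => change (@eq R a b) end. field. apply Rgt_not_eq. apply sqrt_lt_R0. pose proof PI_RGT_0; lra. }
    assert (D2 : forall x0 : R, Rmin x b <= x0 <= Rmax x b -> continuous (fun t : R => t * gauss_pdf t) x0).
    { intros t _. apply (@ex_derive_continuous R_AbsRing R_NormedModule). unfold gauss_pdf.
      auto_derive. easy. }
    rewrite (is_RInt_unique _ _ _ _ (H D1 D2)).
    unfold minus, plus, opp; simpl. ring. }
  assert (H3 : gauss_pdf x <= exp (- x^2/2)).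
  { unfold gauss_pdf. pose proof (exp_pos (- x^2/2)).
    rewrite <- (Rmult_1_l (exp (- x^2/2))) at 2. apply Rmult_le_compat_r. lra.
    rewrite <- Rinv_1. apply Rinv_le_contravar; lra. }
  pose proof (phi_pos b). apply Rabs_def2 in HB. unfold d in HB. lra.
Qed.


Lemma lsum_nil : forall {A} (f : A -> R), lsum f [] = 0.
Proof. reflexivity. Qed.
Lemma lsum_cons : forall {A} (f : A -> R) a l, lsum f (a :: l) = f a + lsum f l.
Proof. reflexivity. Qed.
Lemma lsum_app : forall {A} (f : A -> R) l1 l2, lsum f (l1 ++ l2) = lsum f l1 + lsum f l2.
Proof. intros. induction l1; simpl. unfold lsum; simpl; ring. rewrite !lsum_cons, IHl1. ring. Qed.
Lemma lsum_map : forall {A B} (f : B -> R) (g : A -> B) l, lsum f (map g l) = lsum (fun a => f (g a)) l.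
Proof. intros. induction l. reflexivity. simpl. rewrite !lsum_cons, IHl. reflexivity. Qed.
Lemma lsum_scal : forall {A} (f : A -> R) c l, lsum (fun a => c * f a) l = c * lsum f l.
Proof. intros. induction l. unfold lsum; simpl; ring. rewrite !lsum_cons, IHl. ring. Qed.
Lemma lsum_le : forall {A} (f g : A -> R) l, (forall a, In a l -> f a <= g a) -> lsum f l <= lsum g l.
Proof.
  intros. induction l. unfold lsum; simpl; lra. rewrite !lsum_cons.
  apply Rplus_le_compat. apply H; left; auto. apply IHl; intros; apply H; right; auto.
Qed.
Lemma lsum_ge0 : forall {A} (f : A -> R) l, (forall a, In a l -> 0 <= f a) -> 0 <= lsum f l.
Proof.
  intros. induction l. unfold lsum; simpl; lra. rewrite !lsum_cons.
  apply Rplus_le_le_0_compat. apply H; left; auto. apply IHl; intros; apply H; right; auto.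
Qed.
Lemma lsum_ge_term : forall {A} (f : A -> R) l a0, (forall a, In a l -> 0 <= f a) -> In a0 l -> f a0 <= lsum f l.
Proof.
  intros. induction l. destruct H0. rewrite lsum_cons. destruct H0.
  - subst. assert (0 <= lsum f l) by (apply lsum_ge0; intros; apply H; right; auto). lra.
  - assert (0 <= f a) by (apply H; left; auto). assert (f a0 <= lsum f l) by (apply IHl; auto; intros; apply H; right; auto). lra.
Qed.
Lemma lsum_ext : forall {A} (f g : A -> R) l, (forall a, f a = g a) -> lsum f l = lsum g l.
Proof. intros. induction l. reflexivity. rewrite !lsum_cons, IHl, H. reflexivity. Qed.
Lemma lsum_const : forall {A} c (l : list A), lsum (fun _ => c) l = INR (length l) * c.
Proof. intros. induction l. unfold lsum; simpl; ring. rewrite lsum_cons, IHl. simpl length. rewrite S_INR. ring. Qed.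

Lemma in_bools : forall y, In y (bools (length y)).
Proof.
  induction y; simpl. left; auto.
  apply in_or_app. destruct a; [left | right]; apply in_map; auto.
Qed.

Lemma lsum_ind : forall (m : nat) (A B : R) n s,
  ((s <= m < s + n)%nat -> lsum (fun k => if Nat.eqb k m then A else B) (seq s n) = A + INR (n - 1) * B) /\
  ((m < s)%nat -> lsum (fun k => if Nat.eqb k m then A else B) (seq s n) = INR n * B).
Proof.
  intros m A B n. induction n; intros s; split; intros H.
  - lia.
  - unfold lsum; simpl; ring.
  - simpl seq. rewrite lsum_cons. destruct (Nat.eqb_spec s m).
    + subst. rewrite (proj2 (IHn (S m))) by lia. replace (S n - 1)%nat with n by lia. ring.
    + rewrite (proj1 (IHn (S s))) by lia. destruct n. lia.
      replace (S (S n) - 1)%nat with (S n) by lia. replace (S n - 1)%nat with n by lia.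
      rewrite S_INR. ring.
  - simpl seq. rewrite lsum_cons. destruct (Nat.eqb_spec s m). lia.
    rewrite (proj2 (IHn (S s))) by lia. rewrite S_INR. ring.
Qed.

Lemma filter_ind : forall (m : nat) n s,
  ((s <= m < s + n)%nat -> filter (fun k => Nat.eqb k m) (seq s n) = [m]) /\
  ((m < s)%nat -> filter (fun k => Nat.eqb k m) (seq s n) = []).
Proof.
  intros m n. induction n; intros s; split; intros H.
  - lia.
  - reflexivity.
  - simpl. destruct (Nat.eqb_spec s m).
    + subst. rewrite (proj2 (IHn (S m))) by lia. reflexivity.
    + apply (proj1 (IHn (S s))). lia.
  - simpl. destruct (Nat.eqb_spec s m). lia. apply (proj2 (IHn (S s))). lia.
Qed.

Definition em (M m : nat) : list bool := map (fun k => Nat.eqb k m) (seq 0 M).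

Lemma em_length : forall M m, length (em M m) = M.
Proof. intros. unfold em. rewrite length_map, length_seq. auto. Qed.

Lemma ppm_dec_em : forall M m, (m < M)%nat -> ppm_dec (em M m) = Some m.
Proof.
  intros M m Hm. unfold ppm_dec. rewrite em_length.
  rewrite (filter_ext_in _ (fun k => Nat.eqb k m)).
  - rewrite (proj1 (filter_ind m M 0)) by lia. reflexivity.
  - intros k Hk. apply in_seq in Hk. unfold em.
    rewrite (nth_indep _ false ((fun k => Nat.eqb k m) 0%nat)) by (rewrite length_map, length_seq; lia).
    rewrite (map_nth (fun k0 => Nat.eqb k0 m)), seq_nth by lia. reflexivity.
Qed.


Lemma prob_out_01 : forall (Q : R -> R), (forall x, 0 <= Q x <= 1) ->
  forall sigma th xs y, 0 <= prob_out Q sigma th xs y <= 1.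
Proof.
  intros Q HQ sigma th xs. induction xs as [|x xs IH]; intros y; destruct y as [|b y]; simpl; try lra.
  specialize (IH y). specialize (HQ ((th - x) / sigma)).
  destruct b; split; nra.
Qed.

Lemma prob_out_sum : forall Q sigma th xs,
  lsum (prob_out Q sigma th xs) (bools (length xs)) = 1.
Proof.
  intros Q sigma th xs. induction xs as [|x xs IH].
  - unfold lsum; simpl; ring.
  - simpl length. simpl bools. rewrite lsum_app, !lsum_map. simpl.
    rewrite (lsum_scal (prob_out Q sigma th xs)), (lsum_scal (prob_out Q sigma th xs)), IH. ring.
Qed.

Lemma prob_out_em : forall (Q : R -> R), (forall x, 0 <= Q x <= 1) ->
  forall sigma th xi m n s,
  prob_out Q sigma th (map (fun k => if Nat.eqb k m then xi else 0) (seq s n))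
    (map (fun k => Nat.eqb k m) (seq s n))
  >= 1 - lsum (fun k => if Nat.eqb k m then 1 - Q ((th - xi) / sigma) else Q (th / sigma)) (seq s n).
Proof.
  intros Q HQ sigma th xi m n. induction n; intros s.
  - simpl. unfold lsum; simpl; lra.
  - simpl seq. simpl map. simpl prob_out. rewrite lsum_cons.
    specialize (IHn (S s)).
    pose proof (prob_out_01 Q HQ sigma th (map (fun k => if Nat.eqb k m then xi else 0) (seq (S s) n))
       (map (fun k => Nat.eqb k m) (seq (S s) n))).
    set (P := prob_out _ _ _ _ _) in *.
    set (D := lsum _ _) in *.
    destruct (Nat.eqb s m).
    + pose proof (HQ ((th - xi) / sigma)). nra.
    + rewrite Rminus_0_r. pose proof (HQ (th / sigma)). nra.
Qed.

Lemma perr_m_01 : forall (Q : R -> R), (forall x, 0 <= Q x <= 1) ->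
  forall sigma s m, 0 <= perr_m Q sigma s m <= 1.
Proof.
  intros Q HQ sigma s m. unfold perr_m.
  set (S := fun y => match dec s y with Some m' => if Nat.eqb m' m then prob_out Q sigma (thr s) (codeword s m) y else 0 | None => 0 end).
  assert (HS : forall y, 0 <= S y <= prob_out Q sigma (thr s) (codeword s m) y).
  { intros y. unfold S. pose proof (prob_out_01 Q HQ sigma (thr s) (codeword s m) y).
    destruct (dec s y); [destruct (Nat.eqb n m)|]; lra. }
  assert (H1 : 0 <= lsum S (bools (blen s))) by (apply lsum_ge0; intros; apply HS).
  assert (H2 : lsum S (bools (blen s)) <= 1).
  { rewrite <- (prob_out_sum Q sigma (thr s) (codeword s m)).
    replace (length (codeword s m)) with (blen s) by (unfold codeword; rewrite length_map, length_seq; auto).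
    apply lsum_le; intros; apply HS. }
  lra.
Qed.

Lemma perr_ge0 : forall (Q : R -> R), (forall x, 0 <= Q x <= 1) ->
  forall sigma s, 0 <= perr Q sigma s.
Proof.
  intros. unfold perr. apply Rmul_le_0_compat || idtac.
  apply Rmult_le_pos. destruct (Msz s). simpl. rewrite Rinv_0; lra.
  left; apply Rinv_0_lt_compat, lt_0_INR; lia.
  apply lsum_ge0. intros; apply perr_m_01; auto.
Qed.

Lemma ppm_perr_bound : forall (Q : R -> R), (forall x, 0 <= Q x <= 1) ->
  forall sigma M xi ups, (1 <= M)%nat ->
  perr Q sigma (ppm M xi ups) <= (INR M - 1) * Q (ups / sigma) + (1 - Q ((ups - xi) / sigma)).
Proof.
  intros Q HQ sigma M xi ups HM.
  set (bnd := (INR M - 1) * Q (ups / sigma) + (1 - Q ((ups - xi) / sigma))).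
  assert (Hm : forall m, (m < M)%nat -> perr_m Q sigma (ppm M xi ups) m <= bnd).
  { intros m Hm. unfold perr_m. simpl blen. simpl thr. simpl dec.
    set (S := fun y => match ppm_dec y with Some m' => if Nat.eqb m' m then prob_out Q sigma ups (codeword (ppm M xi ups) m) y else 0 | None => 0 end).
    assert (HS : forall y, 0 <= S y).
    { intros y. unfold S. pose proof (prob_out_01 Q HQ sigma ups (codeword (ppm M xi ups) m) y).
      destruct (ppm_dec y); [destruct (Nat.eqb n m)|]; lra. }
    assert (H1 : S (em M m) <= lsum S (bools M)).
    { apply lsum_ge_term. intros; apply HS. rewrite <- (em_length M m) at 2. apply in_bools. }
    assert (H2 : S (em M m) = prob_out Q sigma ups (codeword (ppm M xi ups) m) (em M m)).
    { unfold S. rewrite ppm_dec_em by auto. rewrite Nat.eqb_refl. reflexivity. }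
    pose proof (prob_out_em Q HQ sigma ups xi m M 0) as H3.
    rewrite (proj1 (lsum_ind m _ _ M 0)) in H3 by lia.
    unfold codeword in H2. simpl in H2. unfold em in H1, H2.
    rewrite minus_INR in H3 by lia. simpl INR in H3.
    unfold bnd. lra. }
  unfold perr. simpl Msz.
  apply Rle_trans with (/ INR M * lsum (fun _ => bnd) (seq 0 M)).
  - apply Rmult_le_compat_l. left; apply Rinv_0_lt_compat, lt_0_INR; lia.
    apply lsum_le. intros a Ha. apply in_seq in Ha. apply Hm. lia.
  - rewrite lsum_const, length_seq. right. field. apply not_0_INR. lia.
Qed.


Lemma up_nat : forall e, 0 < e ->
  e < INR (Z.to_nat (up e)) <= e + 1 /\ (1 <= Z.to_nat (up e))%nat.
Proof.
  intros e He. destruct (archimed e) as [H1 H2].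
  assert (Hp : (0 < up e)%Z) by (apply lt_IZR; lra).
  assert (HI : INR (Z.to_nat (up e)) = IZR (up e)) by (rewrite INR_IZR_INZ, Z2Nat.id by lia; reflexivity).
  rewrite HI. split. lra.
  apply (INR_le 1). rewrite HI. apply IZR_le. lia.
Qed.

Lemma exp_small : forall c d E, 0 < c -> 0 < d -> 2 / (c * d) <= E -> exp (- (c * E)) < d / 2.
Proof.
  intros c d E Hc Hd HE.
  assert (HE' : 2 / d <= c * E).
  { apply Rmult_le_reg_l with (/ c). apply Rinv_0_lt_compat; lra.
    replace (/ c * (c * E)) with E by (field; lra).
    replace (/ c * (2 / d)) with (2 / (c * d)) by (field; lra). auto. }
  pose proof (exp_ineq1_le (c * E)).
  assert (0 < 2 / d) by (apply Rdiv_lt_0_compat; lra).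
  rewrite exp_Ropp. replace (d/2) with (/ (2/d)) by (field; lra).
  apply Rinv_lt_contravar. apply Rmult_lt_0_compat; auto; apply exp_pos. lra.
Qed.

Lemma sqrt_ge_from_sq : forall x y, 0 <= x -> 0 <= y -> y^2 <= x^2 -> y <= x.
Proof. intros. nra. Qed.


Lemma part1 : forall (Q : R -> R) (HQ : forall x : R, gauss_tail x (Q x))
  (sigma Rdot eps qinv : R), 0 < sigma -> Q qinv = eps -> forall M, (1 <= M)%nat ->
     perr Q sigma (ppm_thm sigma Rdot qinv M)
       <= (INR M - 1) * Q ((xi_of Rdot M - sigma * qinv) / sigma) + eps.
Proof.
  intros Q HQ sigma Rdot eps qinv Hs Hq M HM.
  assert (H01 : forall x, 0 <= Q x <= 1) by (intros; split; [apply Q_ge0 | apply Q_le1]; auto).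
  unfold ppm_thm. eapply Rle_trans. apply ppm_perr_bound; auto.
  replace ((xi_of Rdot M - sigma * qinv - xi_of Rdot M) / sigma) with (- qinv) by (field; lra).
  rewrite (Q_sym Q HQ). lra.
Qed.

Lemma part2 : forall (Q : R -> R) (HQ : forall x : R, gauss_tail x (Q x))
  (sigma Rdot eps qinv : R)
  (Hsigma : 0 < sigma) (HRpos : 0 < Rdot) (HRlt : Rdot < 1 / (2 * sigma ^ 2))
  (Hqinv : Q qinv = eps),
  (forall d : R, 0 < d -> exists N : nat, forall M : nat, (N <= M)%nat ->
        perr Q sigma (ppm_thm sigma Rdot qinv M) <= eps + d).
Proof.
  intros Q HQ sigma Rdot eps qinv Hs HR HRl Hq d Hd.
  assert (H01 : forall x, 0 <= Q x <= 1) by (intros; split; [apply Q_ge0 | apply Q_le1]; auto).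
  set (beta := Rdot * sigma^2).
  assert (Hs2 : 0 < sigma^2) by nra.
  assert (Hb1 : beta < 1/2).
  { unfold beta. apply Rmult_lt_compat_r with (r := sigma^2) in HRl; auto.
    replace (1 / (2 * sigma ^ 2) * sigma ^ 2) with (1/2) in HRl by (field; lra). lra. }
  assert (Hb0 : 0 < beta) by (unfold beta; nra).
  set (b := 1/2 - beta).
  set (X0 := 1 + Rabs qinv + (Rabs qinv + Rabs (ln d)) / b).
  assert (HX0 : 1 + Rabs qinv <= X0).
  { unfold X0. assert (0 <= (Rabs qinv + Rabs (ln d)) / b).
    { apply Rmult_le_pos. pose proof (Rabs_pos qinv); pose proof (Rabs_pos (ln d)); lra.
      left; apply Rinv_0_lt_compat; unfold b; lra. } lra. }
  assert (HX0b : Rabs qinv + Rabs (ln d) <= b * X0).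
  { unfold X0. assert (0 < b) by (unfold b; lra).
    replace (b * (1 + Rabs qinv + (Rabs qinv + Rabs (ln d)) / b))
      with (b * (1 + Rabs qinv) + (Rabs qinv + Rabs (ln d))) by (field; lra).
    pose proof (Rabs_pos qinv). nra. }
  set (T := beta * X0^2).
  assert (HT : 0 < T) by (unfold T; apply Rmult_lt_0_compat; auto; pose proof (Rabs_pos qinv); nra).
  destruct (up_nat (exp T) (exp_pos T)) as [[HN1 HN2] HN3].
  exists (Z.to_nat (up (exp T)) + 2)%nat. intros M HM.
  assert (HM1 : (1 <= M)%nat) by lia.
  eapply Rle_trans. apply part1; auto.
  cut ((INR M - 1) * Q ((xi_of Rdot M - sigma * qinv) / sigma) <= d). lra.
  assert (HMpos : 0 < INR M) by (apply lt_0_INR; lia).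
  assert (HlnM : T <= ln (INR M)).
  { rewrite <- (ln_exp T). left. apply ln_increasing. apply exp_pos.
    apply Rlt_le_trans with (INR (Z.to_nat (up (exp T)))). lra. apply le_INR. lia. }
  set (L := ln (INR M)) in *.
  set (xi := xi_of Rdot M).
  assert (Hxi2 : xi * xi = L / Rdot).
  { unfold xi, xi_of. apply sqrt_sqrt. apply Rmult_le_pos; [lra | left; apply Rinv_0_lt_compat; lra]. }
  assert (Hxi0 : 0 <= xi) by (unfold xi, xi_of; apply sqrt_pos).
  set (x := xi / sigma).
  assert (Hx0 : 0 <= x) by (unfold x; apply Rmult_le_pos; auto; left; apply Rinv_0_lt_compat; lra).
  assert (HL : L = beta * x^2).
  { unfold x, beta. replace (Rdot * sigma^2 * (xi/sigma)^2) with (Rdot * (xi * xi)) by (field; lra).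
    rewrite Hxi2. field. lra. }
  assert (HxX : X0 <= x).
  { apply sqrt_ge_from_sq; auto. pose proof (Rabs_pos qinv); lra.
    unfold T in HlnM. rewrite HL in HlnM. apply Rmult_le_reg_l with beta; auto. }
  set (z := (xi - sigma * qinv) / sigma).
  assert (Hz : z = x - qinv) by (unfold z, x; field; lra).
  assert (Hz1 : 1 <= z).
  { rewrite Hz. pose proof (Rle_abs qinv) as Ha. lra. }
  pose proof (Q_tail Q HQ z Hz1) as Hqt.
  pose proof (H01 z) as [Hz0 _].
  apply Rle_trans with (INR M * exp (- z^2/2)).
  { apply Rle_trans with (INR M * Q z). nra. apply Rmult_le_compat_l; lra. }
  rewrite <- (exp_ln (INR M)) by auto. fold L. rewrite <- exp_plus.
  rewrite <- (exp_ln d) by auto. apply exp_le_mono.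
  rewrite HL, Hz.
  assert (Hqx : qinv * x <= Rabs qinv * x) by (apply Rmult_le_compat_r; auto; apply Rle_abs).
  assert (Hld : - ln d <= Rabs (ln d)) by (rewrite <- Rabs_Ropp; apply Rle_abs).
  assert (Hbx : Rabs qinv + Rabs (ln d) <= b * x).
  { apply Rle_trans with (b * X0); auto. apply Rmult_le_compat_l; unfold b; lra. }
  assert (H1x : 1 <= x) by (pose proof (Rabs_pos qinv); lra).
  assert (Hkey : Rabs (ln d) <= x * (b * x - Rabs qinv)).
  { pose proof (Rabs_pos (ln d)). nra. }
  unfold b in Hkey. nra.
Qed.


Lemma part3 : forall (Q : R -> R) (HQ : forall x : R, gauss_tail x (Q x)) (sigma : R),
  0 < sigma -> forall Rd : R, Rd < 1 / (2 * sigma ^ 2) -> achievable_by is_ppm Q sigma Rd.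
Proof.
  intros Q HQ sigma Hs Rd HRd eps' He.
  assert (H01 : forall x, 0 <= Q x <= 1) by (intros; split; [apply Q_ge0 | apply Q_le1]; auto).
  assert (Hs2 : 0 < sigma^2) by nra.
  set (r0 := 1 / (2 * sigma^2)) in *.
  assert (Hr0 : 0 < r0) by (unfold r0; apply Rdiv_lt_0_compat; lra).
  set (r := Rmax Rd (r0/2)).
  assert (Hr1 : Rd <= r) by apply Rmax_l.
  assert (Hr2 : r0/2 <= r) by apply Rmax_r.
  assert (Hr3 : r < r0) by (apply Rmax_lub_lt; lra).
  set (rho := (1 + r / r0) / 2).
  assert (Hrr : r / r0 < 1) by (apply Rmult_lt_reg_r with r0; auto; unfold Rdiv; rewrite Rmult_assoc, Rinv_l; lra).
  assert (Hrr0 : 0 < r / r0) by (apply Rdiv_lt_0_compat; lra).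
  assert (Hrho : 0 < rho < 1) by (unfold rho; lra).
  set (lam := sqrt rho).
  assert (Hlam2 : lam * lam = rho) by (apply sqrt_sqrt; lra).
  assert (Hlam0 : 0 < lam) by (apply sqrt_lt_R0; lra).
  assert (Hlam1 : lam < 1) by (unfold lam; rewrite <- sqrt_1; apply sqrt_lt_1_alt; lra).
  exists (fun E => ppm (Z.to_nat (up (exp (r * E)))) (sqrt E) (lam * sqrt E)).
  split.
  - intros E HE. destruct (up_nat (exp (r*E)) (exp_pos _)) as [[U1 U2] U3].
    split. { exists (sqrt E), (lam * sqrt E). reflexivity. }
    split. { simpl; auto. }
    split.
    + intros m Hm. simpl in Hm. simpl blen. simpl cw.
      rewrite (lsum_ext _ (fun k => if Nat.eqb k m then E else 0)).
      * rewrite (proj1 (lsum_ind m E 0 _ 0)) by lia. lra.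
      * intros k. destruct (Nat.eqb k m). simpl. rewrite Rmult_1_r. apply sqrt_sqrt; lra. simpl; ring.
    + simpl Msz. 
      assert (Hl : r * E < ln (INR (Z.to_nat (up (exp (r * E)))))).
      { rewrite <- (ln_exp (r * E)) at 1. apply ln_increasing. apply exp_pos. auto. }
      apply Rlt_gt. apply Rle_lt_trans with r. lra.
      apply Rmult_lt_reg_r with E; auto. unfold Rdiv. rewrite Rmult_assoc, Rinv_l; lra.
  - intros d Hd.
    set (kap := (r0 - r) / 2).
    assert (Hk : 0 < kap) by (unfold kap; lra).
    set (c2 := (1 - lam)^2 * r0).
    assert (Hc2 : 0 < c2) by (unfold c2; apply Rmult_lt_0_compat; auto; nra).
    assert (Hl1 : 0 < (1 - lam)^2) by nra.
    set (E0 := 1 + sigma^2 / rho + sigma^2 / (1 - lam)^2 + 2 / (kap * d) + 2 / (c2 * d)).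
    assert (P1 : 0 <= sigma^2 / rho) by (apply Rmult_le_pos; [lra | left; apply Rinv_0_lt_compat; lra]).
    assert (P2 : 0 <= sigma^2 / (1 - lam)^2) by (apply Rmult_le_pos; [lra | left; apply Rinv_0_lt_compat; lra]).
    assert (P3 : 0 <= 2 / (kap * d)) by (apply Rmult_le_pos; [lra | left; apply Rinv_0_lt_compat; nra]).
    assert (P4 : 0 <= 2 / (c2 * d)) by (apply Rmult_le_pos; [lra | left; apply Rinv_0_lt_compat; nra]).
    exists E0. intros E HE.
    assert (HE0 : 0 < E) by (unfold E0 in HE; lra).
    destruct (up_nat (exp (r*E)) (exp_pos _)) as [[U1 U2] U3].
    set (M := Z.to_nat (up (exp (r * E)))) in *.
    rewrite Rabs_pos_eq by (apply perr_ge0; auto).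
    eapply Rle_lt_trans. apply ppm_perr_bound; auto.
    set (x := sqrt E / sigma).
    assert (Hx2 : x * x = E / sigma^2).
    { unfold x. replace (sqrt E / sigma * (sqrt E / sigma)) with ((sqrt E * sqrt E) / sigma^2) by (field; lra).
      rewrite sqrt_sqrt; lra. }
    assert (Hx0 : 0 <= x) by (unfold x; apply Rmult_le_pos; [apply sqrt_pos | left; apply Rinv_0_lt_compat; lra]).
    replace ((lam * sqrt E - sqrt E) / sigma) with (- ((1 - lam) * x)) by (unfold x; field; lra).
    replace (lam * sqrt E / sigma) with (lam * x) by (unfold x; field; lra).
    rewrite (Q_sym Q HQ).
    assert (HlamE : sigma^2 / rho <= E) by (unfold E0 in HE; lra).
    assert (HlamE2 : sigma^2 / (1 - lam)^2 <= E) by (unfold E0 in HE; lra).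
    assert (HkE : 2 / (kap * d) <= E) by (unfold E0 in HE; lra).
    assert (Hc2E : 2 / (c2 * d) <= E) by (unfold E0 in HE; lra).
    assert (Hsq : E / sigma^2 = 2 * r0 * E) by (unfold r0; field; lra).
    assert (A1 : 1 <= lam * x).
    { apply sqrt_ge_from_sq; try lra. nra.
      replace ((lam * x)^2) with (rho * (E / sigma^2)) by (rewrite <- Hlam2, <- Hx2; ring).
      apply Rmult_le_reg_l with (/ rho). apply Rinv_0_lt_compat; lra.
      replace (/ rho * (rho * (E / sigma ^ 2))) with (E / sigma^2) by (field; lra).
      replace (/ rho * 1 ^ 2) with (/ rho) by ring.
      apply Rmult_le_reg_r with (sigma^2); auto.
      replace (E / sigma ^ 2 * sigma ^ 2) with E by (field; lra).
      replace (/ rho * sigma^2) with (sigma^2 / rho) by (unfold Rdiv; ring). auto. }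
    assert (A2 : 1 <= (1 - lam) * x).
    { apply sqrt_ge_from_sq; try lra. nra.
      replace (((1 - lam) * x)^2) with ((1 - lam)^2 * (E / sigma^2)) by (rewrite <- Hx2; ring).
      apply Rmult_le_reg_l with (/ (1 - lam)^2). apply Rinv_0_lt_compat; lra.
      replace (/ (1 - lam)^2 * ((1 - lam)^2 * (E / sigma ^ 2))) with (E / sigma^2) by (field; lra).
      replace (/ (1 - lam)^2 * 1 ^ 2) with (/ (1 - lam)^2) by ring.
      apply Rmult_le_reg_r with (sigma^2); auto.
      replace (E / sigma ^ 2 * sigma ^ 2) with E by (field; lra).
      replace (/ (1 - lam)^2 * sigma^2) with (sigma^2 / (1 - lam)^2) by (unfold Rdiv; ring). auto. }
    assert (T1 : (INR M - 1) * Q (lam * x) < d / 2).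
    { pose proof (Q_tail Q HQ _ A1) as Qt. pose proof (H01 (lam * x)) as [Qa _].
      apply Rle_lt_trans with (exp (r * E) * exp (- (lam * x) ^ 2 / 2)).
      { assert (0 <= INR M - 1) by (apply (le_INR 1) in U3; simpl in U3; lra).
        apply Rmult_le_compat; try lra. }
      rewrite <- exp_plus.
      replace (r * E + - (lam * x) ^ 2 / 2) with (- (kap * E)).
      apply exp_small; auto.
      replace ((lam * x)^2) with (rho * (x * x)) by (rewrite <- Hlam2; ring).
      rewrite Hx2, Hsq. unfold kap, rho. field. lra. }
    assert (T2 : Q ((1 - lam) * x) < d / 2).
    { pose proof (Q_tail Q HQ _ A2) as Qt.
      apply Rle_lt_trans with (exp (- ((1 - lam) * x) ^ 2 / 2)); auto.
      replace (- ((1 - lam) * x) ^ 2 / 2) with (- (c2 * E)).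
      apply exp_small; auto.
      replace (((1 - lam) * x)^2) with ((1 - lam)^2 * (x * x)) by ring.
      rewrite Hx2, Hsq. unfold c2. field. }
    lra.
Qed.


Theorem mainTheorem2 (Q : R -> R) (HQ : forall x : R, gauss_tail x (Q x))
  (sigma Rdot eps qinv : R)
  (Hsigma : 0 < sigma) (HRpos : 0 < Rdot) (HRlt : Rdot < 1 / (2 * sigma ^ 2))
  (Heps : 0 < eps < 1) (Hqinv : Q qinv = eps) :
  (forall M : nat, (2 <= M)%nat ->
     perr Q sigma (ppm_thm sigma Rdot qinv M)
       <= (INR M - 1) * Q ((xi_of Rdot M - sigma * qinv) / sigma) + eps)
  /\ (forall d : R, 0 < d -> exists N : nat, forall M : nat, (N <= M)%nat ->
        perr Q sigma (ppm_thm sigma Rdot qinv M) <= eps + d)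
  /\ (forall Rd : R, Rd < 1 / (2 * sigma ^ 2) -> achievable_by is_ppm Q sigma Rd).
Proof.
  split; [| split].
  - intros M HM. apply part1; auto. lia.
  - apply part2; auto.
  - apply part3; auto.
Qed.
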